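(* Let $R$ be a commutative Noetherian ring, $M$ a faithful primeful $R$-module having at least one prime submodule, $X=\mathrm{Spec}(M)$, $N$ an $R$-module, $K\le M$, $U=X\setminus V(K)$, and $W$ an open subset of $X$ with $U\subseteq W$. Let $\rho_{WU}:\mathcal{A}(N,M)(W)\to\mathcal{A}(N,M)(U)$ be the restriction map. Then $\ker(\rho_{WU})=\Gamma_{(K:M)}(\mathcal{A}(N,M)(W))$.
   Context: For a submodule $L$ of an $R$-module $M$, $(L:M)=\{r\in R\mid rM\subseteq L\}$. A submodule $P$ of $M$ is prime if $P\neq M$ and whenever $rm\in P$ ($r\in R$, $m\in M$) then $r\in (P:M)$ or $m\in P$. $\mathrm{Spec}(M)$ is the set of prime submodules. $M$ is faithful if $\mathrm{Ann}_R(M)=0$; primeful if $M=0$ or $\mathrm{Spec}(M)\to\mathrm{Spec}(R/\mathrm{Ann}(M))$, $P\mapsto(P:M)/\mathrm{Ann}(M)$, is surjective. For $L\le M$, $V(L)=\{P\in X\mid (P:M)\supseteq (L:M)\}$; these are the closed sets of the Zariski topology. For open $U\subseteq X$, $\mathrm{Supp}(U)=\{(P:M)\mid P\in U\}$. $\mathcal{A}(N,M)(U)$ is the $R$-module of families $(\gamma_{\mathfrak p})_{\mathfrak p\in\mathrm{Supp}(U)}\in\prod_{\mathfrak p\in\mathrm{Supp}(U)}N_{\mathfrak p}$ such that for each $Q\in U$ there exist an open neighbourhood $W'\subseteq U$ of $Q$ and $s\in R$, $m\in N$ with $s\notin(P:M)$ and $\gamma_{(P:M)}=m/s$ for every $P\in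 W'$. For $V\subseteq U$ open, $\rho_{UV}$ sends $(\gamma_{\mathfrak p})_{\mathfrak p\in\mathrm{Supp}(U)}$ to $(\gamma_{\mathfrak p})_{\mathfrak p\in\mathrm{Supp}(V)}$ (zero map if $V=\emptyset$). $\Gamma_I(H)=\bigcup_{n\ge1}(0:_H I^n)$. *)

(* Defs.v *)
From HB Require Import structures.
From mathcomp Require Import all_boot all_algebra.
Set Implicit Arguments. Unset Strict Implicit. Unset Printing Implicit Defensive.
Import GRing.Theory.
Local Open Scope ring_scope.

Section Defs.
Variable R : comNzRingType.

Definition is_ideal (I : R -> Prop) : Prop :=
  I 0 /\ (forall x y, I x -> I y -> I (x + y)) /\ (forall r x, I x -> I (r * x)).

Definition prime_ideal (p : R -> Prop) : Prop :=
  is_ideal p /\ ~ p 1 /\ (forall x y, p (x * y) -> p x \/ p y).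

Definition noetherian : Prop :=
  forall I : nat -> R -> Prop, (forall n, is_ideal (I n)) ->
    (forall n r, I n r -> I n.+1 r) ->
    exists k, forall n r, (k <= n)%N -> I n r -> I k r.

Definition ideal_mul (I J : R -> Prop) (r : R) : Prop :=
  exists s : seq (R * R), (forall x, x \in s -> I x.1 /\ J x.2) /\
    r = \sum_(x <- s) x.1 * x.2.

Fixpoint ideal_pow (I : R -> Prop) (n : nat) : R -> Prop :=
  match n with
  | 0 => fun _ => True
  | n'.+1 => ideal_mul (ideal_pow I n') I
  end.

Section Mod.
Variable M : lmodType R.

Definition submod (L : M -> Prop) : Prop :=
  L 0 /\ (forall x y, L x -> L y -> L (x + y)) /\ (forall r x, L x -> L (r *: x)).

Definition colon (L : M -> Prop) (r : R) : Prop := forall m : M, L (r *: m).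

Definition ann : R -> Prop := colon (fun m => m = 0).

Definition prime_submod (P : M -> Prop) : Prop :=
  submod P /\ (exists m, ~ P m) /\
  (forall (r : R) (m : M), P (r *: m) -> colon P r \/ P m).

Definition faithful : Prop := forall r, ann r -> r = 0.

(* surjectivity of Spec(M) -> Spec(R/Ann M), via the correspondence between
   primes of R/Ann(M) and primes of R containing Ann(M) *)
Definition primeful : Prop :=
  (forall m : M, m = 0) \/
  forall p : R -> Prop, prime_ideal p -> (forall r, ann r -> p r) ->
    exists P, prime_submod P /\ forall r, colon P r <-> p r.

Definition spec := {P : M -> Prop | prime_submod P}.

Definition zV (L : M -> Prop) (P : spec) : Prop :=
  forall r, colon L r -> colon (sval P) r.

Definition zopen (U : spec -> Prop) : Prop :=
  exists L, submod L /\ forall P, U P <-> ~ zV L P.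

Definition supp (U : spec -> Prop) (p : R -> Prop) : Prop :=
  exists P, U P /\ colon (sval P) = p.

Section Loc.
Variable N : lmodType R.

(* localization N_p: elements are equivalence classes of pairs (m, s), s \notin p *)
Definition loc_rel (p : R -> Prop) (x y : N * R) : Prop :=
  ~ p y.2 /\ exists t, ~ p t /\ t *: (y.2 *: x.1 - x.2 *: y.1) = 0.

Definition frac (p : R -> Prop) (m : N) (s : R) : N * R -> Prop := loc_rel p (m, s).

Definition loc0 (p : R -> Prop) := frac p 0 1.

Definition loc_scale (p : R -> Prop) (r : R) (C : N * R -> Prop) : N * R -> Prop :=
  fun y => exists x, C x /\ ~ p x.2 /\ loc_rel p (r *: x.1, x.2) y.

(* a family (gamma_p)_p; only the components at p in Supp(W) are meaningful *)
Definition fam := (R -> Prop) -> (N * R -> Prop).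

(* gamma \in A(N,M)(W) *)
Definition sect (W : spec -> Prop) (g : fam) : Prop :=
  forall Q, W Q -> exists W', zopen W' /\ (forall P, W' P -> W P) /\ W' Q /\
    exists (s : R) (m : N), forall P, W' P ->
      ~ colon (sval P) s /\ g (colon (sval P)) = frac (colon (sval P)) m s.

(* ker(rho_{WU}) : families in A(N,M)(W) whose restriction to Supp(U) is 0 *)
Definition restr_ker (W U : spec -> Prop) (g : fam) : Prop :=
  sect W g /\ forall p, supp U p -> g p = loc0 p.

(* Gamma_I(A(N,M)(W)) = union over n >= 1 of (0 :_{A(W)} I^n) *)
Definition Gamma (I : R -> Prop) (W : spec -> Prop) (g : fam) : Prop :=
  sect W g /\ exists n, (1 <= n)%N /\
    forall r, ideal_pow I n r -> forall p, supp W p -> loc_scale p r (g p) = loc0 p.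

End Loc.
End Mod.
End Defs.

(* Main.v *)
Require Import Defs.
From HB Require Import structures.
From mathcomp Require Import all_boot all_algebra.
From mathcomp Require Import ring.
From Stdlib Require Import Classical FunctionalExtensionality PropExtensionality IndefiniteDescription.
Set Implicit Arguments. Unset Strict Implicit. Unset Printing Implicit Defensive.
Import GRing.Theory.
Local Open Scope ring_scope.

Lemma ideal_sum (R : comNzRingType) (T : R -> Prop) (I : eqType) (s : seq I) (F : I -> R) :
  is_ideal T -> (forall x, x \in s -> T (F x)) -> T (\sum_(x <- s) F x).
Proof.
move=> [T0 [TD TM]]; elim: s => [|a s IH] H; first by rewrite big_nil.
rewrite big_cons; apply: TD; first by apply: H; rewrite mem_head.
by apply: IH => x Hx; apply: H; rewrite in_cons Hx orbT.
Qed.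

Lemma in_In (T : eqType) (x : T) s : x \in s -> List.In x s.
Proof. elim: s => //= a s IH; rewrite in_cons => /orP [/eqP->|/IH]; by [left|right]. Qed.

Lemma ideal_mul_ideal (R : comNzRingType) (A B : R -> Prop) :
  is_ideal A -> is_ideal (ideal_mul A B).
Proof.
move=> [A0 [AD AM]]; split; [|split].
- by exists [::]; split => //; rewrite big_nil.
- move=> x y [s1 [H1 ->]] [s2 [H2 ->]]; exists (s1 ++ s2); split; last by rewrite big_cat.
  by move=> z; rewrite mem_cat => /orP [/H1|/H2].
- move=> r x [s [H ->]]; exists (map (fun z => (r * z.1, z.2)) s); split.
  + move=> z /mapP [w /H [Hw1 Hw2] ->] /=; split => //; exact: AM.
  + by rewrite big_map mulr_sumr; apply: eq_bigr => i _ /=; rewrite mulrA.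
Qed.

Lemma pow_ideal (R : comNzRingType) (I : R -> Prop) n : is_ideal I -> is_ideal (ideal_pow I n).
Proof.
move=> HI; elim: n => [|n IH] /=; first by split.
exact: ideal_mul_ideal.
Qed.

Lemma mul_sub_l (R : comNzRingType) (A B : R -> Prop) r :
  is_ideal A -> ideal_mul A B r -> A r.
Proof.
move=> HA [s [H ->]]; apply: ideal_sum => // x Hx.
have [H1 _] := H x Hx; case: HA => [_ [_ AM]]; rewrite mulrC; exact: AM.
Qed.

Lemma mul_sub_r (R : comNzRingType) (A B : R -> Prop) r :
  is_ideal B -> ideal_mul A B r -> B r.
Proof.
move=> HB [s [H ->]]; apply: ideal_sum => // x Hx.
have [_ H2] := H x Hx; case: HB => [_ [_ BM]]; exact: BM.
Qed.

Lemma pow_anti (R : comNzRingType) (I : R -> Prop) n m r :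
  is_ideal I -> (n <= m)%N -> ideal_pow I m r -> ideal_pow I n r.
Proof.
move=> HI; elim: m => [|m IH] Hnm Hr.
  by move: Hnm; rewrite leqn0 => /eqP->.
move: Hnm; rewrite leq_eqVlt => /orP [/eqP->//|Hlt].
apply: IH => //; apply: (@mul_sub_l _ _ I) => //; exact: pow_ideal.
Qed.

Lemma pow_mem (R : comNzRingType) (I : R -> Prop) n x :
  I x -> ideal_pow I n (x ^+ n).
Proof.
move=> Hx; elim: n => [|n IH] //=.
exists [:: (x ^+ n, x)]; split; first by move=> z; rewrite inE => /eqP-> /=.
by rewrite big_cons big_nil addr0 exprSr.
Qed.

Lemma pow1_sub (R : comNzRingType) (I : R -> Prop) r :
  is_ideal I -> ideal_pow I 1 r -> I r.
Proof. move=> HI; exact: mul_sub_r. Qed.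

Lemma pow_add (R : comNzRingType) (I : R -> Prop) a b r :
  is_ideal I -> ideal_pow I (a + b) r -> ideal_mul (ideal_pow I a) (ideal_pow I b) r.
Proof.
move=> HI; elim: b r => [|b IH] r.
  rewrite addn0 => Hr; exists [:: (r, 1)]; split; first by move=> z; rewrite inE => /eqP-> /=.
  by rewrite big_cons big_nil addr0 mulr1.
rewrite addnS /= => [[s [H ->]]].
apply: ideal_sum; first by apply: ideal_mul_ideal; exact: pow_ideal.
move=> x Hx; have [H1 H2] := H x Hx.
have [s' [H' ->]] := IH _ H1.
rewrite mulr_suml.
exists (map (fun u => (u.1, u.2 * x.2)) s'); split.
- move=> z /mapP [u Hu ->] /=; have [Hu1 Hu2] := H' u Hu; split => //.
  exists [:: (u.2, x.2)]; split; first by move=> w; rewrite inE => /eqP-> /=.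
  by rewrite big_cons big_nil addr0.
- by rewrite big_map; apply: eq_bigr => i _ /=; rewrite mulrA.
Qed.


Lemma noeth_max (R : comNzRingType) (F : (R -> Prop) -> Prop) (T0 : R -> Prop) :
  noetherian R -> (forall T, F T -> is_ideal T) -> F T0 ->
  exists T, F T /\ forall T', F T' -> (forall r, T r -> T' r) -> forall r, T' r -> T r.
Proof.
move=> HN HF H0; apply: NNPP => Hno.
have step : forall X : {T | F T}, {Y : {T | F T} |
   (forall r, sval X r -> sval Y r) /\ exists r, sval Y r /\ ~ sval X r}.
  move=> [X HX]; apply: constructive_indefinite_description.
  apply: NNPP => Hn; apply: Hno; exists X; split => // T' HT' HXT' r HT'r.
  apply: NNPP => HXr; apply: Hn; exists (exist _ T' HT') => /=; split => //.
  by exists r.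
pose c n := sval (iter n (fun X => sval (step X)) (exist _ T0 H0)).
have cS n : c n.+1 = sval (sval (step (iter n (fun X => sval (step X)) (exist _ T0 H0)))).
  by [].
have Hinc : forall n r, c n r -> c n.+1 r.
  move=> n r; rewrite cS; exact: (proj1 (svalP (step _))).
have [k Hk] := HN c (fun n => HF _ (svalP (iter n (fun X => sval (step X)) (exist _ T0 H0)))) Hinc.
have [Hs [r [Hr1 Hr2]]] := svalP (step (iter k (fun X => sval (step X)) (exist _ T0 H0))).
by apply: Hr2; apply: (Hk k.+1) => //; rewrite cS.
Qed.

Lemma sat_pow (R : comNzRingType) (T : R -> Prop) (f : R) k r :
  (forall r, T (f * r) -> T r) -> T (f ^+ k * r) -> T r.
Proof.
move=> HS; elim: k r => [|k IH] r; first by rewrite expr0 mul1r.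
move=> H; apply: HS; apply: IH.
by have -> : f ^+ k * (f * r) = f ^+ k.+1 * r by rewrite exprS; ring.
Qed.

Definition satx (R : comNzRingType) (T : R -> Prop) (f x : R) (r : R) : Prop :=
  exists k t c, T t /\ f ^+ k * r = t + c * x.

Lemma satx_ideal (R : comNzRingType) (T : R -> Prop) (f x : R) :
  is_ideal T -> is_ideal (satx T f x).
Proof.
move=> [T0 [TD TM]]; split; [|split].
- by exists 0%N, 0, 0; split => //; rewrite mulr0 mul0r addr0.
- move=> a b [k1 [t1 [c1 [Ht1 E1]]]] [k2 [t2 [c2 [Ht2 E2]]]].
  exists (k1 + k2)%N, (f ^+ k2 * t1 + f ^+ k1 * t2), (f ^+ k2 * c1 + f ^+ k1 * c2).
  split; first by apply: TD; apply: TM.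
  have -> : f ^+ (k1 + k2) * (a + b) = f ^+ k2 * (f ^+ k1 * a) + f ^+ k1 * (f ^+ k2 * b).
    by rewrite exprD; ring.
  rewrite E1 E2; ring.
- move=> r a [k [t [c [Ht E]]]]; exists k, (r * t), (r * c); split; first exact: TM.
  have -> : f ^+ k * (r * a) = r * (f ^+ k * a) by ring.
  rewrite E; ring.
Qed.

Lemma key_lemma (R : comNzRingType) (I T0 : R -> Prop) (f : R) :
  noetherian R -> is_ideal I -> is_ideal T0 -> (forall r, T0 (f * r) -> T0 r) ->
  (forall p, prime_ideal p -> (forall r, T0 r -> p r) -> ~ p f -> forall x, I x -> p x) ->
  exists n, forall r, ideal_pow I n r -> T0 r.
Proof.
move=> HN HI HT0 HS0 Hp; apply: NNPP => Hno.
pose F T := [/\ is_ideal T, (forall r, T0 r -> T r), (forall r, T (f * r) -> T r)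
   & ~ exists n, forall r, ideal_pow I n r -> T r].
have [T [[HT HT0T HST HnT] Hmax]] : exists T, F T /\ forall T', F T' -> (forall r, T r -> T' r) -> forall r, T' r -> T r.
  by apply: (noeth_max HN (T0 := T0)) => [T []//|]; split.
have HT' := HT; case: HT' => [Z0 [ZD ZM]].
have all_in : T 1 -> False.
  move=> H1; apply: HnT; exists 0%N => r _; rewrite -(mulr1 r); exact: ZM.
have ext : forall x, ~ T x -> exists n, forall r, ideal_pow I n r -> satx T f x r.
  move=> x Hx; apply: NNPP => Hn.
  have HA : F (satx T f x).
    split; first exact: satx_ideal.
    - by move=> r /HT0T Hr; exists 0%N, r, 0; rewrite expr0 mul1r mul0r addr0.
    - move=> r [k [t [c [Ht E]]]]; exists k.+1, t, c; split => //; rewrite -E exprS; ring.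
    - exact: Hn.
  apply: Hx; apply: (Hmax _ HA).
    by move=> r Hr; exists 0%N, r, 0; rewrite expr0 mul1r mul0r addr0.
  by exists 0%N, 0, 1; rewrite expr0 !mul1r add0r.
have Tprime : prime_ideal T.
  split => //; split => // x y Hxy; apply: NNPP => Hn.
  have Hx : ~ T x by move=> H; apply: Hn; left.
  have Hy : ~ T y by move=> H; apply: Hn; right.
  have [n1 H1] := ext x Hx; have [n2 H2] := ext y Hy.
  apply: HnT; exists (n1 + n2)%N => r Hr.
  have [s [Hs ->]] := pow_add HI Hr.
  apply: ideal_sum => // z Hz; have [Hz1 Hz2] := Hs z Hz.
  have [k1 [t1 [c1 [Ht1 E1]]]] := H1 _ Hz1.
  have [k2 [t2 [c2 [Ht2 E2]]]] := H2 _ Hz2.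
  apply: (sat_pow (k := (k1 + k2)%N) HST).
  have -> : f ^+ (k1 + k2) * (z.1 * z.2) = (f ^+ k1 * z.1) * (f ^+ k2 * z.2) by rewrite exprD; ring.
  rewrite E1 E2.
  have -> : (t1 + c1 * x) * (t2 + c2 * y) = t1 * (t2 + c2 * y) + (c1 * x) * t2 + (c1 * c2) * (x * y) by ring.
  apply: (ZD); [apply: (ZD)|].
  - by rewrite mulrC; apply: (ZM).
  - exact: (ZM).
  - exact: (ZM).
have Hf : ~ T f.
  move=> H; apply: all_in; apply: HST; rewrite mulr1; exact: H.
have HIT := Hp T Tprime HT0T Hf.
apply: HnT; exists 1%N => r Hr; apply: HIT; exact: pow1_sub.
Qed.

Lemma prime_mul (R : comNzRingType) (p : R -> Prop) a b :
  prime_ideal p -> ~ p a -> ~ p b -> ~ p (a * b).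
Proof. by move=> [_ [_ Hp]] Ha Hb /Hp []. Qed.

Lemma prime_pow (R : comNzRingType) (p : R -> Prop) r n :
  prime_ideal p -> ~ p r -> ~ p (r ^+ n).
Proof.
move=> Hp Hr; elim: n => [|n IH]; first by rewrite expr0; case: Hp => [_ []].
rewrite exprS; exact: prime_mul.
Qed.

Lemma colon_prime (R : comNzRingType) (M : lmodType R) (P : M -> Prop) :
  prime_submod P -> prime_ideal (colon P).
Proof.
move=> [[P0 [PD PZ]] [[m0 Hm0] Hpr]]; split; [split; [|split]|split].
- by move=> m; rewrite scale0r.
- by move=> x y Hx Hy m; rewrite scalerDl; apply: PD.
- by move=> r x Hx m; rewrite -scalerA; apply: PZ.
- by move=> H; apply: Hm0; have := H m0; rewrite scale1r.
- move=> x y Hxy; case: (classic (colon P x)) => Hx; first by left.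
  right => m; have := Hpr x (y *: m); rewrite scalerA => H.
  by case: (H (Hxy m)).
Qed.

Lemma rel_eq (R : comNzRingType) (N : lmodType R) (t a b : R) (u v : N) :
  t *: (a *: u - b *: v) = 0 <-> (t * a) *: u = (t * b) *: v.
Proof.
rewrite scalerBr !scalerA; split => [/eqP|->]; last by rewrite subrr.
by rewrite subr_eq0 => /eqP.
Qed.

Lemma frac_self (R : comNzRingType) (N : lmodType R) (p : R -> Prop) (m : N) s :
  prime_ideal p -> ~ p s -> Defs.frac p m s (m, s).
Proof.
move=> Hp Hs; split => //; exists 1; split; last by rewrite subrr scaler0.
by case: Hp => [_ []].
Qed.

Lemma loc_scale_frac (R : comNzRingType) (N : lmodType R) (p : R -> Prop) (m : N) s r :
  prime_ideal p -> ~ p s -> loc_scale p r (Defs.frac p m s) = Defs.frac p (r *: m) s.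
Proof.
move=> Hp Hs; apply: functional_extensionality => y; apply: propositional_extensionality.
split.
- move=> [[x1 x2] [[/= Hx2 [t1 [Ht1 /rel_eq E1]]] [_ [Hy2 [t2 [Ht2 /rel_eq E2]]]]]] /=.
  simpl in *.
  split => //; exists (t1 * t2 * x2); split.
    by apply: prime_mul => //; apply: prime_mul.
  apply/rel_eq.
  case: y Hy2 E2 => y1 y2 /= Hy2 E2.
  rewrite scalerA.
  have -> : t1 * t2 * x2 * y2 * r = (t2 * y2 * r) * (t1 * x2) by ring.
  rewrite -scalerA E1 scalerA.
  have -> : t2 * y2 * r * (t1 * s) = ((t1 * s) * (t2 * y2)) * r by ring.
  rewrite -scalerA -scalerA E2 scalerA; congr (_ *: _); ring.
- move=> Hy; exists (m, s); split; first exact: frac_self.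
  by split.
Qed.

Lemma frac0_to (R : comNzRingType) (N : lmodType R) (p : R -> Prop) (m : N) s :
  prime_ideal p -> ~ p s -> Defs.frac p m s = loc0 p -> exists t, ~ p t /\ t *: m = 0.
Proof.
move=> Hp Hs E; have := frac_self m Hp Hs; rewrite E => [[_ [t [Ht /rel_eq E']]]].
exists t; split => //; move: E'; rewrite scaler0 mulr1 => ->.
by [].
Qed.

Lemma frac0_of (R : comNzRingType) (N : lmodType R) (p : R -> Prop) (m : N) s t :
  prime_ideal p -> ~ p s -> ~ p t -> t *: m = 0 -> Defs.frac p m s = loc0 p.
Proof.
move=> Hp Hs Ht Em; apply: functional_extensionality => [[y1 y2]].
apply: propositional_extensionality; split.
- move=> [/= Hy2 [t' [Ht' /rel_eq /= E]]]; split => //; exists (t * t' * s); split.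
    by apply: prime_mul => //; apply: prime_mul.
  apply/rel_eq => /=; rewrite scaler0 mulr1 -mulrA -scalerA -E scalerA.
  by rewrite mulrC -scalerA Em scaler0.
- move=> [/= Hy2 [t'' [Ht'' /rel_eq /= E]]]; split => //; exists (t * t''); split.
    exact: prime_mul.
  move: E; rewrite scaler0 mulr1 => E.
  apply/rel_eq => /=.
  have -> : t * t'' * y2 = t'' * y2 * t by ring.
  have -> : t * t'' * s = t * s * t'' by ring.
  by rewrite -!scalerA Em -E !scaler0.
Qed.

Lemma colon_ideal (R : comNzRingType) (M : lmodType R) (K : M -> Prop) :
  submod K -> is_ideal (colon K).
Proof.
move=> [P0 [PD PZ]]; split; [|split].
- by move=> m; rewrite scale0r.
- by move=> x y Hx Hy m; rewrite scalerDl; apply: PD.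
- by move=> r x Hx m; rewrite -scalerA; apply: PZ.
Qed.

Lemma notzV (R : comNzRingType) (M : lmodType R) (L : M -> Prop) (P : spec M) :
  ~ zV L P -> exists j, colon L j /\ ~ colon (sval P) j.
Proof.
move=> H; apply: NNPP => Hn; apply: H => r Hr; apply: NNPP => Hr'; apply: Hn.
by exists r.
Qed.

Theorem proposition3p10 (R : comNzRingType) (M N : lmodType R)
  (K : M -> Prop) (W : spec M -> Prop) :
  noetherian R -> faithful M -> primeful M ->
  (exists P : M -> Prop, prime_submod P) ->
  submod K -> zopen W ->
  (forall P : spec M, ~ zV K P -> W P) ->
  forall g : fam N,
    restr_ker W (fun P : spec M => ~ zV K P) g <-> Gamma (colon K) W g.
Proof.
move=> HN Hf Hpf _ HK _ HUW g.
have primeful' : forall p, prime_ideal p -> exists P : spec M, colon (sval P) = p.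
  move=> p Hp; case: Hpf => [H0|H].
    exfalso; have H1 : ann M 1 by move=> m; rewrite scale1r; exact: H0.
    by move: (Hf 1 H1) => /eqP; rewrite oner_eq0.
  have [|P [HP Hiff]] := H p Hp.
    move=> r /Hf ->; by case: Hp => [[]].
  exists (exist _ P HP) => /=; apply: functional_extensionality => r.
  exact: propositional_extensionality.
have HI := colon_ideal HK.
have suppP : forall p, Defs.supp W p -> prime_ideal p.
  move=> p [P [_ <-]]; exact: colon_prime (svalP P).
split.
- move=> [Hsect Hker]; split => //.
  pose S n t := forall r, ideal_pow (colon K) n r -> forall p, Defs.supp W p -> ~ p t ->
     loc_scale p r (g p) = loc0 p.
  have Smono : forall n n' t, (n <= n')%N -> S n t -> S n' t.
    move=> n n' t Hnn' H r Hr; apply: H; exact: pow_anti Hr.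
  have Sideal : forall n, is_ideal (S n).
    move=> n; split; [|split].
    + move=> r _ p Hp H; exfalso; apply: H; by case: (suppP p Hp) => [[]].
    + move=> x y Hx Hy r Hr p Hp Hxy.
      case: (classic (p x)) => Hpx; last exact: Hx.
      case: (classic (p y)) => Hpy; last exact: Hy.
      by exfalso; apply: Hxy; case: (suppP p Hp) => [[_ [PD _]] _]; apply: PD.
    + move=> a x Hx r Hr p Hp Hax; apply: Hx => // Hpx; apply: Hax.
      by case: (suppP p Hp) => [[_ [_ PM]] _]; apply: PM.
  have [k Hk] := HN S Sideal (fun n t => Smono n n.+1 t (leqnSn n)).
  exists k.+1; split => // r Hr p Hp.
  have [P [HWP Ep]] := Hp.
  have [W' [[L' [HL' HW']] [HW'W [HW'P [s [m Hloc]]]]]] := Hsect P HWP.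
  have [j [Hj Hjn]] := notzV (proj1 (HW' P) HW'P).
  pose T0 r := exists k, (j ^+ k * r) *: m = 0.
  have HT0 : is_ideal T0.
    split; [|split].
    + by exists 0%N; rewrite mulr0 scale0r.
    + move=> a b [k1 E1] [k2 E2]; exists (k1 + k2)%N.
      have -> : j ^+ (k1 + k2) * (a + b) = j ^+ k2 * (j ^+ k1 * a) + j ^+ k1 * (j ^+ k2 * b).
        by rewrite exprD; ring.
      by rewrite scalerDl -(scalerA (j ^+ k2)) E1 -(scalerA (j ^+ k1)) E2 !scaler0 addr0.
    + move=> a b [k1 E1]; exists k1.
      have -> : j ^+ k1 * (a * b) = a * (j ^+ k1 * b) by ring.
      by rewrite -(scalerA a) E1 scaler0.
  have HsatT : forall r, T0 (j * r) -> T0 r.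
    move=> a [k1 E1]; exists k1.+1; rewrite -E1 exprS; congr (_ *: _); ring.
  have W'of : forall P' : spec M, ~ colon (sval P') j -> W' P'.
    move=> P' Hj'; apply/HW' => Hz; apply: Hj'; exact: Hz.
  have [n0 Hn0] : exists n, forall r, ideal_pow (colon K) n r -> T0 r.
    apply: (key_lemma HN HI HT0 HsatT).
    move=> q Hq HTq Hjq x Hx; apply: NNPP => Hqx.
    have [P' EP'] := primeful' q Hq; subst q.
    have HW'P' := W'of P' Hjq.
    have HUP' : ~ zV K P' by move=> Hz; apply: Hqx; exact: Hz.
    have [Hs' Eg] := Hloc P' HW'P'.
    have : Defs.supp (fun P : spec M => ~ zV K P) (colon (sval P')) by exists P'.
    move=> /Hker; rewrite Eg => E.
    have [t [Ht Etm]] := frac0_to (colon_prime (svalP P')) Hs' E.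
    by apply: Ht; apply: HTq; exists 0%N; rewrite expr0 mul1r.
  have HSn0 : S n0 j.
    move=> r' Hr' p' [P' [HWP' <-]] Hj'.
    have [Hs' Eg] := Hloc P' (W'of P' Hj').
    have Hpr := colon_prime (svalP P').
    rewrite Eg loc_scale_frac //.
    have [k' Ek'] := Hn0 r' Hr'.
    apply: (frac0_of (t := j ^+ k')) => //; first exact: prime_pow.
    by rewrite scalerA.
  have HSk : S k j.
    case: (leqP n0 k) => Hle; first exact: Smono HSn0.
    by move=> r' Hr'; apply: (Hk n0) => //; apply: ltnW.
  by apply: (Smono k k.+1 j (leqnSn k) HSk) => //; rewrite -Ep.
- move=> [Hsect [n [Hn Hann]]]; split => // p [P [HUP <-]].
  have [r [Hr Hrn]] := notzV HUP.
  have [W' [_ [_ [HW'P [s [m Hloc]]]]]] := Hsect P (HUW P HUP).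
  have [Hs Eg] := Hloc P HW'P.
  have Hpr := colon_prime (svalP P).
  have : Defs.supp W (colon (sval P)) by exists P; split => //; apply: HUW.
  move=> /(Hann (r ^+ n) (pow_mem n Hr)); rewrite Eg loc_scale_frac // => E.
  have [t [Ht Etm]] := frac0_to Hpr Hs E.
  apply: (frac0_of (t := t * r ^+ n)) => //.
    by apply: prime_mul => //; apply: prime_pow.
  by rewrite -scalerA.
Qed.
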